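(* Let $(V,\le,\preccurlyeq)$ be a mixed lattice vector space whose cone $V_{sp}$ is generating ($V=V_{sp}-V_{sp}$), equipped with a vector topology $\tau$. The following are equivalent: (a) $\tau$ is locally mixed-full and the mixed lattice operations are continuous at zero; (b) for every neighborhood $U$ of zero there exists a neighborhood $W$ of zero with $W\subseteq U$ and $MS_1(W)\subseteq U$; (c) for every neighborhood $U$ of zero there exists a neighborhood $W$ of zero with $W\subseteq U$ and $MS_2(W)\subseteq U$.
   Context: A mixed lattice vector space $(V,\le,\preccurlyeq)$ is a real vector space $V$ with two partial orderings $\le$ (initial order) and $\preccurlyeq$ (specific order), each making $V$ a partially ordered vector space, with positive cones $V_p=\{x:0\le x\}$, $V_{sp}=\{x:0\preccurlyeq x\}$, such that: (1) for all $x,y$ the elements $x\curlyvee y=\min\{w: w\succcurlyeq x,\ w\ge y\}$ and $x\curlywedge y=\max\{w: w\preccurlyeq x,\ w\le y\}$ exist (min/max with respect to $\le$); (2) $x\preccurlyeq y$ implies $x\le y$; (3) $x\curlyvee y, x\curlywedge y\in V_{sp}$ whenever $x,y\in V_{sp}$. The mixed lattice operations are $(x,y)\mapsto x\curlyvee y$, $(x,y)\mapsto x\curlywedge y$; ''continuous at zero'' means continuous at $(0,0)$. Notation: $x^u=0\curlyvee x$, $x^l=0\curlyvee(-x)$, $s(x)=x^u+x^l$; $MS_1(A)=\{y: -s(x)\preccurlyeq y\le s(x)\text{ for some }x\in A\}$, $MS_2(A)=\{y: -s(x)\le y\preccurlyeq s(x)\text{ for some }x\in A\}$. $\tau$ is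 locally mixed-full if every neighborhood of zero contains a neighborhood $W$ of zero such that $y\in W$ and $0\preccurlyeq x\le y$ imply $x\in W$. *)

(* Defs.v *)
From HB Require Import structures.
From mathcomp Require Import all_boot all_order all_algebra.
From mathcomp Require Import all_classical all_reals all_analysis.
Set Implicit Arguments. Unset Strict Implicit. Unset Printing Implicit Defensive.
Import Order.TTheory GRing.Theory Num.Theory.
Local Open Scope classical_set_scope.
Local Open Scope ring_scope.

Section MixedLattice.
Variables (R : realType) (V : lmodType R).

Definition ordered_vs (le : V -> V -> Prop) : Prop :=
  [/\ (forall x, le x x),
      (forall x y, le x y -> le y x -> x = y),
      (forall x y z, le x y -> le y z -> le x z),
      (forall x y z, le x y -> le (x + z) (y + z)) &
      (forall (a : R) x y, 0 <= a -> le x y -> le (a *: x) (a *: y))].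

Definition is_mixed_sup (le sle : V -> V -> Prop) (x y w : V) : Prop :=
  [/\ sle x w, le y w & forall w', sle x w' -> le y w' -> le w w'].

Definition is_mixed_inf (le sle : V -> V -> Prop) (x y w : V) : Prop :=
  [/\ sle w x, le w y & forall w', sle w' x -> le w' y -> le w' w].

Definition mixed_lattice_vs (le sle : V -> V -> Prop) (msup minf : V -> V -> V)
  : Prop :=
  [/\ ordered_vs le /\ ordered_vs sle,
      (forall x y, is_mixed_sup le sle x y (msup x y)),
      (forall x y, is_mixed_inf le sle x y (minf x y)),
      (forall x y, sle x y -> le x y) &
      (forall x y, sle 0 x -> sle 0 y -> sle 0 (msup x y) /\ sle 0 (minf x y))].

Definition sp_generating (sle : V -> V -> Prop) : Prop :=
  forall v, exists a b, [/\ sle 0 a, sle 0 b & v = a - b].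

(* s(x) = x^u + x^l with x^u = 0 ⋎ x, x^l = 0 ⋎ (-x) *)
Definition upper_part (msup : V -> V -> V) (x : V) := msup 0 x.
Definition lower_part (msup : V -> V -> V) (x : V) := msup 0 (- x).
Definition sabs (msup : V -> V -> V) (x : V) :=
  upper_part msup x + lower_part msup x.

Definition MS1 (le sle : V -> V -> Prop) (msup : V -> V -> V) (A : set V)
  : set V :=
  [set y | exists2 x, A x & sle (- sabs msup x) y /\ le y (sabs msup x)].

Definition MS2 (le sle : V -> V -> Prop) (msup : V -> V -> V) (A : set V)
  : set V :=
  [set y | exists2 x, A x & le (- sabs msup x) y /\ sle y (sabs msup x)].

End MixedLattice.

Section Topo.
Variables (R : realType) (V : topologicalLmodType R).

Definition locally_mixed_full (le sle : V -> V -> Prop) : Prop :=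
  forall U, nbhs (0 : V) U ->
    exists W, [/\ nbhs (0 : V) W, W `<=` U &
      forall x y, W y -> sle 0 x -> le x y -> W x].

Definition ops_continuous_at_zero (msup minf : V -> V -> V) : Prop :=
  {for ((0 : V), (0 : V)), continuous (fun p : V * V => msup p.1 p.2)} /\
  {for ((0 : V), (0 : V)), continuous (fun p : V * V => minf p.1 p.2)}.
End Topo.

(* Main.v *)
Require Import Defs.
From HB Require Import structures.
From mathcomp Require Import all_boot all_order all_algebra.
From mathcomp Require Import all_classical all_reals all_analysis.
Import Order.TTheory GRing.Theory Num.Theory.
Local Open Scope classical_set_scope.
Local Open Scope ring_scope.

Section Helpers.
Set Implicit Arguments.
Unset Strict Implicit.
Lemma ovT (R : realType) (V : lmodType R) (le : V -> V -> Prop) :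
  ordered_vs le -> forall x y z, le x y -> le y z -> le x z.
Proof. by case. Qed.

Lemma ovR (R : realType) (V : lmodType R) (le : V -> V -> Prop) :
  ordered_vs le -> forall x, le x x.
Proof. by case. Qed.

Lemma ovA (R : realType) (V : lmodType R) (le : V -> V -> Prop) :
  ordered_vs le -> forall x y, le x y -> le y x -> x = y.
Proof. by case. Qed.

Lemma ovD (R : realType) (V : lmodType R) (le : V -> V -> Prop) :
  ordered_vs le -> forall x y z, le x y -> le (x + z) (y + z).
Proof. by case. Qed.

Lemma ovN (R : realType) (V : lmodType R) (le : V -> V -> Prop) :
  ordered_vs le -> forall x y, le x y -> le (- y) (- x).
Proof.
move=> H x y Hxy; have := ovD H (- x - y) Hxy.
have -> : x + (- x - y) = - y by rewrite addrA subrr add0r.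
by have -> : y + (- x - y) = - x by rewrite addrC -addrA addNr addr0.
Qed.

Lemma ovDD (R : realType) (V : lmodType R) (le : V -> V -> Prop) :
  ordered_vs le -> forall a b c d, le a b -> le c d -> le (a + c) (b + d).
Proof.
move=> H a b c d h1 h2; apply: (ovT H (ovD H c h1)).
by rewrite (addrC b c) (addrC b d); exact: ovD.
Qed.

Lemma ov0D (R : realType) (V : lmodType R) (le : V -> V -> Prop) :
  ordered_vs le -> forall a b, le 0 a -> le 0 b -> le 0 (a + b).
Proof. by move=> H a b h1 h2; rewrite -(addr0 0); exact: ovDD. Qed.

Section ML.
Local Notation ML R V le sle msup minf :=
  (@mixed_lattice_vs R V le sle msup minf).

Lemma msup_uniq (R : realType) (V : lmodType R) le sle (msup minf : V -> V -> V) :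
  ML R V le sle msup minf -> forall x y w, is_mixed_sup le sle x y w -> msup x y = w.
Proof.
case=> [[Hle Hsle] Hsup _ _ _] x y w [h1 h2 h3].
case: (Hsup x y) => k1 k2 k3.
by apply: (ovA Hle); [exact: k3|exact: h3].
Qed.

Lemma minf_uniq (R : realType) (V : lmodType R) le sle (msup minf : V -> V -> V) :
  ML R V le sle msup minf -> forall x y w, is_mixed_inf le sle x y w -> minf x y = w.
Proof.
case=> [[Hle Hsle] _ Hinf _ _] x y w [h1 h2 h3].
case: (Hinf x y) => k1 k2 k3.
by apply: (ovA Hle); [exact: h3|exact: k3].
Qed.

Lemma msupT (R : realType) (V : lmodType R) le sle (msup minf : V -> V -> V) :
  ML R V le sle msup minf -> forall x y c, msup (x + c) (y + c) = msup x y + c.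
Proof.
move=> H x y c; apply: (msup_uniq H).
case: H => [[Hle Hsle] Hsup _ _ _]; case: (Hsup x y) => k1 k2 k3.
split; [exact: ovD|exact: ovD|] => w' h1 h2.
have := ovD Hle c (k3 (w' - c) _ _).
rewrite subrK; apply.
- by have := ovD Hsle (- c) h1; rewrite addrK.
- by have := ovD Hle (- c) h2; rewrite addrK.
Qed.

Lemma msup_shift (R : realType) (V : lmodType R) le sle (msup minf : V -> V -> V) :
  ML R V le sle msup minf -> forall x y, msup x y = msup 0 (y - x) + x.
Proof. by move=> H x y; rewrite -(msupT H) add0r subrK. Qed.

Lemma minfN (R : realType) (V : lmodType R) le sle (msup minf : V -> V -> V) :
  ML R V le sle msup minf -> forall x y, minf x y = - msup (- x) (- y).
Proof.
move=> H x y; apply: (minf_uniq H).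
case: H => [[Hle Hsle] Hsup _ _ _]; case: (Hsup (- x) (- y)) => k1 k2 k3.
split.
- by have := ovN Hsle k1; rewrite opprK.
- by have := ovN Hle k2; rewrite opprK.
- move=> w' h1 h2.
  have := ovN Hle (k3 (- w') (ovN Hsle h1) (ovN Hle h2)); rewrite opprK; apply.
Qed.

Lemma minf_shift (R : realType) (V : lmodType R) le sle (msup minf : V -> V -> V) :
  ML R V le sle msup minf -> forall x y, minf x y = - msup 0 (x - y) + x.
Proof.
move=> H x y; rewrite (minfN H) (msup_shift H) opprD !opprK.
by rewrite (addrC (- y)).
Qed.

Lemma msup00 (R : realType) (V : lmodType R) le sle (msup minf : V -> V -> V) :
  ML R V le sle msup minf -> msup 0 0 = 0.
Proof.
move=> H; apply: (msup_uniq H).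
case: H => [[Hle Hsle] _ _ _ _].
by split; [exact: ovR|exact: ovR|].
Qed.

Lemma up_sle (R : realType) (V : lmodType R) le sle (msup minf : V -> V -> V) :
  ML R V le sle msup minf -> forall t, sle 0 (msup 0 t).
Proof. by case=> _ Hsup _ _ _ t; case: (Hsup 0 t). Qed.

Lemma up_le (R : realType) (V : lmodType R) le sle (msup minf : V -> V -> V) :
  ML R V le sle msup minf -> forall t, le t (msup 0 t).
Proof. by case=> _ Hsup _ _ _ t; case: (Hsup 0 t). Qed.

Lemma sabs_sle (R : realType) (V : lmodType R) le sle (msup minf : V -> V -> V) :
  ML R V le sle msup minf -> forall t, sle 0 (sabs msup t).
Proof.
move=> H t; have [[Hle Hsle] _ _ _ _] := H.
by apply: (ov0D Hsle); exact: (up_sle H).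
Qed.

Lemma up_le_sabs (R : realType) (V : lmodType R) le sle (msup minf : V -> V -> V) :
  ML R V le sle msup minf -> forall t, le (msup 0 t) (sabs msup t).
Proof.
move=> H t; have [[Hle Hsle] _ _ Hsl _] := H.
rewrite /sabs /upper_part /lower_part.
have := ovD Hle (msup 0 t) (Hsl _ _ (up_sle H (- t))).
by rewrite add0r addrC.
Qed.

Lemma le_sabs (R : realType) (V : lmodType R) le sle (msup minf : V -> V -> V) :
  ML R V le sle msup minf -> forall t, le t (sabs msup t).
Proof.
move=> H t; have [[Hle Hsle] _ _ _ _] := H.
exact: (ovT Hle (up_le H t) (up_le_sabs H t)).
Qed.

Lemma sleN0 (R : realType) (V : lmodType R) le sle (msup minf : V -> V -> V) :
  ML R V le sle msup minf -> forall a, sle 0 a -> sle (- a) 0.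
Proof.
move=> H a ha; have [[Hle Hsle] _ _ _ _] := H.
by have := ovN Hsle ha; rewrite oppr0.
Qed.

Lemma MS1_up (R : realType) (V : lmodType R) le sle (msup minf : V -> V -> V) :
  ML R V le sle msup minf -> forall (A : set V) t, A t ->
  MS1 le sle msup A (msup 0 t).
Proof.
move=> H A t At; have [[Hle Hsle] _ _ _ _] := H.
exists t => //; split; last exact: (up_le_sabs H).
exact: (ovT Hsle (sleN0 H (sabs_sle H t)) (up_sle H t)).
Qed.

Lemma MS1_full (R : realType) (V : lmodType R) le sle (msup minf : V -> V -> V) :
  ML R V le sle msup minf -> forall (A : set V) x y,
  (A y \/ MS1 le sle msup A y) -> sle 0 x -> le x y -> MS1 le sle msup A x.
Proof.
move=> H A x y hy h0 hxy; have [[Hle Hsle] _ _ _ _] := H.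
case: hy => [Ay|[w Aw [h1 h2]]].
  exists y => //; split; first exact: (ovT Hsle (sleN0 H (sabs_sle H y)) h0).
  exact: (ovT Hle hxy (le_sabs H y)).
exists w => //; split; first exact: (ovT Hsle (sleN0 H (sabs_sle H w)) h0).
exact: (ovT Hle hxy h2).
Qed.

Lemma MS21 (R : realType) (V : lmodType R) le sle (msup minf : V -> V -> V) :
  ML R V le sle msup minf -> forall (A : set V) y,
  MS2 le sle msup A y -> MS1 le sle msup A (- y).
Proof.
move=> H A y [x Ax [h1 h2]]; have [[Hle Hsle] _ _ _ _] := H.
exists x => //; split; first exact: ovN.
by have := ovN Hle h1; rewrite opprK.
Qed.

Lemma MS12 (R : realType) (V : lmodType R) le sle (msup minf : V -> V -> V) :
  ML R V le sle msup minf -> forall (A : set V) y,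
  MS1 le sle msup A y -> MS2 le sle msup A (- y).
Proof.
move=> H A y [x Ax [h1 h2]]; have [[Hle Hsle] _ _ _ _] := H.
exists x => //; split; first exact: ovN.
by have := ovN Hsle h1; rewrite opprK.
Qed.

End ML.

Lemma nbhs_split (R : realType) (V : topologicalLmodType R) (U : set V) :
  nbhs (0:V) U -> exists W, [/\ nbhs (0:V) W, (forall a b, W a -> W b -> U (a + b)),
    (forall a, W a -> W (- a)) & W `<=` U].
Proof.
move=> U0.
have := @add_continuous V (0, 0) U; rewrite /= addr0 => /(_ U0) [[W1 W2]] [] /= N1 N2 Wadd.
pose W0 := W1 `&` W2.
have NW0 : nbhs (0:V) W0 by exact: filterI.
have NW0' : nbhs (0:V) (fun v => W0 (- v)).
  by have := @opp_continuous V 0 W0; rewrite /= oppr0 => /(_ NW0).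
have hadd : forall a b, W0 a -> W0 b -> U (a + b).
  by move=> a b [Ha _] [_ Hb]; exact: (Wadd (a, b)).
exists (fun v => W0 v /\ W0 (- v)); split.
- exact: filterI.
- by move=> a b [] ? _ [] ? _; exact: hadd.
- by move=> a [h1 h2]; split; rewrite ?opprK.
- move=> a [h1 _]; rewrite -(addr0 a); apply: hadd => //.
  exact: nbhs_singleton.
Qed.

Lemma nbhs_neg (R : realType) (V : topologicalLmodType R) (U : set V) :
  nbhs (0:V) U -> nbhs (0:V) (fun v => U (- v)).
Proof.
by move=> U0; have := @opp_continuous V 0 U; rewrite /= oppr0 => /(_ U0).
Qed.

End Helpers.

Theorem theorem3p15 (R : realType) (V : topologicalLmodType R)
  (le sle : V -> V -> Prop) (msup minf : V -> V -> V) :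
  mixed_lattice_vs le sle msup minf ->
  sp_generating sle ->
  [/\ (locally_mixed_full le sle /\ ops_continuous_at_zero msup minf) <->
        (forall U, nbhs (0 : V) U -> exists W,
           [/\ nbhs (0 : V) W, W `<=` U & MS1 le sle msup W `<=` U]),
      (locally_mixed_full le sle /\ ops_continuous_at_zero msup minf) <->
        (forall U, nbhs (0 : V) U -> exists W,
           [/\ nbhs (0 : V) W, W `<=` U & MS2 le sle msup W `<=` U]) &
      (forall U, nbhs (0 : V) U -> exists W,
           [/\ nbhs (0 : V) W, W `<=` U & MS1 le sle msup W `<=` U]) <->
      (forall U, nbhs (0 : V) U -> exists W,
           [/\ nbhs (0 : V) W, W `<=` U & MS2 le sle msup W `<=` U])].
Proof.
move=> H _.
have [[Hle Hsle] Hsup Hinf Hsl Hcl] := H.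
set P1 := (forall U, _ -> exists W, [/\ _, _ & MS1 le sle msup W `<=` U]).
set P2 := (forall U, _ -> exists W, [/\ _, _ & MS2 le sle msup W `<=` U]).
set A := (_ /\ _).
have BC : P1 -> P2.
  move=> h1 U U0.
  have [W [W0 WU MU]] := h1 (fun v => U v /\ U (- v)) (filterI U0 (nbhs_neg U0)).
  exists W; split => // [v /WU []//|y /(MS21 H) /MU []]; by rewrite opprK.
have CB : P2 -> P1.
  move=> h2 U U0.
  have [W [W0 WU MU]] := h2 (fun v => U v /\ U (- v)) (filterI U0 (nbhs_neg U0)).
  exists W; split => // [v /WU []//|y /(MS12 H) /MU []]; by rewrite opprK.
have AB : A -> P1.
  move=> [lmf [cs _]].
  have cu : forall U : set V, nbhs (0:V) U -> nbhs (0:V) (fun t => U (msup 0 t)).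
    move=> U U0; have := cs U; rewrite /= (msup00 H) => /(_ U0).
    move=> [[PA PB]] [] /= NA NB hAB.
    apply: filterS NB => t Bt; exact: (hAB (0, t)) (conj (nbhs_singleton NA) Bt).
  move=> U U0.
  have [U1 [U1n U1add U1neg U1U]] := nbhs_split U0.
  have [F [Fn FU1 Ffull]] := lmf U1 U1n.
  have [F1 [F1n F1add _ F1F]] := nbhs_split Fn.
  have [G [Gn Gadd _ _]] := nbhs_split F1n.
  have N1 := cu G Gn.
  exists (fun t => U t /\ (G (msup 0 t) /\ G (msup 0 (- t)))); split.
  - by apply: filterI => //; apply: filterI => //; exact: (nbhs_neg N1).
  - by move=> t [].
  move=> y [x [_ [Gx Gnx]] [h1 h2]].
  have sF1 : F1 (sabs msup x) by exact: Gadd.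
  have zs : sle 0 (y + sabs msup x).
    by have := ovD Hsle (sabs msup x) h1; rewrite addNr.
  have zl : le (y + sabs msup x) (sabs msup x + sabs msup x) by exact: ovD.
  have Fz : F (y + sabs msup x) by apply: Ffull zs zl; exact: F1add.
  rewrite -(addrK (sabs msup x) y); apply: U1add; first exact: FU1.
  by apply: U1neg; exact: FU1 (F1F _ sF1).
have BA : P1 -> A.
  move=> h1; split.
  - move=> U U0; have [W [Wn WU MU]] := h1 U U0.
    exists (fun v => W v \/ MS1 le sle msup W v); split.
    + by apply: filterS Wn => v; left.
    + by move=> v [/WU|/MU].
    + by move=> x y hy hx hxy; right; exact: (MS1_full H hy hx hxy).
  have key : forall U : set V, nbhs (0:V) U -> exists N, nbhs (0:V) N /\
      forall p1 p2, N p1 -> N p2 ->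
        U (msup 0 (p2 - p1) + p1) /\ U (- msup 0 (p1 - p2) + p1).
    move=> U U0.
    have [U1 [U1n U1add U1neg U1U]] := nbhs_split U0.
    have [W [Wn WU MU]] := h1 U1 U1n.
    have [N [Nn Nadd Nneg NW]] := nbhs_split Wn.
    exists N; split => // p1 p2 n1 n2; split.
    + apply: U1add; last exact: WU (NW _ n1).
      by apply: MU; apply: (MS1_up H); apply: Nadd => //; exact: Nneg.
    + apply: U1add; last exact: WU (NW _ n1).
      by apply: U1neg; apply: MU; apply: (MS1_up H); apply: Nadd => //; exact: Nneg.
  split.
  + move=> U; rewrite /= (msup00 H) => U0.
    have [N [Nn hN]] := key U U0.
    exists (N, N) => //= -[p1 p2] [/= n1 n2].
    by rewrite (msup_shift H); exact: (hN _ _ n1 n2).1.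
  + move=> U; rewrite /= (minf_shift H) subrr (msup00 H) oppr0 addr0 => U0.
    have [N [Nn hN]] := key U U0.
    exists (N, N) => //= -[p1 p2] [/= n1 n2].
    by rewrite (minf_shift H); exact: (hN _ _ n1 n2).2.
split; split => //.
- by move=> /AB /BC.
- by move=> /CB /BA.
Qed.
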